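(* Assume the environments are defined by a class of linear spurious correlation latent SCMs $\mathcal{M}_\mathcal{E}$ and let $e^+$ be any test domain with $\mathcal{M}_{e^+}\in\mathcal{M}_\mathcal{E}$. Then for empirical risk minimization (i.e., with no constraint on $\theta\in\mathbb{R}^d$) in logistic regression, $$\mathbb{E}_{({\mathbf{x}}_{e^+},{\textnormal{y}}_{e^+})\sim\mathbb{P}_{\mathrm{test}}}[\ell_{\mathrm{LL}}(\theta^\top{\mathbf{x}}_{e^+},{\textnormal{y}}_{e^+})]\le\mathbb{E}_{({\mathbf{x}},{\textnormal{y}})\sim\mathbb{P}_{\mathrm{train}}}[\ell_{\mathrm{LL}}(\theta^\top{\mathbf{x}},{\textnormal{y}})]+\|\theta\|\sqrt{\lambda_1(e^+)}.$$
   Context: Setting. $\mathcal{E}$ is a set of domains; each domain $e$ has an SCM sharing exogenous noise ${\mathbf{u}}\sim\mathbb{P}_\mathcal{U}$, latent variables ${\mathbf{z}}$, observed ${\mathbf{x}}\in\mathbb{R}^d$ and target ${\textnormal{y}}\in\{-1,1\}$. Latent mechanisms $f_{e,i}$ may depend on $e$ (solution map $f_e:{\bm{u}}\mapsto{\bm{z}}$); the observed mechanisms are shared: ${\mathbf{x}}_e=g_{\mathbf{x}}(f_e({\mathbf{u}}))$ with $g_{\mathbf{x}}$ linear, and ${\textnormal{y}}$ is the sign of a linear function of ${\mathbf{z}}$; the SCMs are linear. The intervention set $\mathcal{I}(\mathcal{F}_\mathcal{E})=\{i:f_{e,i}\neq f_{e',i}\text{ for some }e,e'\}$ contains no ancestor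 of ${\textnormal{y}}$ (spurious correlation assumption). Training domains $\mathcal{E}_{\mathrm{train}}\subseteq\mathcal{E}$ have weights $\mathbb{P}(e)$ and $\mathbb{P}_{\mathrm{train}}=\sum_e\mathbb{P}(e)\mathbb{P}_e$; $\mathbb{P}_{\mathrm{test}}$ is the distribution of domain $e^+$. With the same ${\mathbf{u}}$, ${\mathbf{x}}_{e^+}=g_{\mathbf{x}}(f_{e^+}({\mathbf{u}}))$ and ${\mathbf{x}}_{e^+\to e}=g_{\mathbf{x}}(f_e({\mathbf{u}}))$. $\lambda_1(e^+)$ is the largest eigenvalue of $M_{e^+}:=\sum_{e\in\mathcal{E}_{\mathrm{train}}}\mathbb{P}(e)\mathbb{E}_{\mathbf{u}}[({\mathbf{x}}_{e^+}-{\mathbf{x}}_{e^+\to e})({\mathbf{x}}_{e^+}-{\mathbf{x}}_{e^+\to e})^\top]$. $\ell_{\mathrm{LL}}(t,y)=\log(1+e^{-yt})$ and $\|\cdot\|$ is the Euclidean norm. *)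

(* Defs.v *)
From HB Require Import structures.
From mathcomp Require Import all_boot all_order all_algebra.
From mathcomp Require Import all_classical all_reals all_analysis.
Set Implicit Arguments. Unset Strict Implicit. Unset Printing Implicit Defensive.
Import Order.TTheory GRing.Theory Num.Theory.
Import numFieldNormedType.Exports.
Local Open Scope classical_set_scope.
Local Open Scope ring_scope.

Section Defs.
Variable R : realType.

(* sign with convention sign(0) = 1, so that y takes values in {-1,1} *)
Definition sgn (t : R) : R := if 0 <= t then 1 else -1.

Definition ll_loss (t y : R) : R := ln (1 + expR (- (y * t))).

Definition dotc n (a b : 'cV[R]_n) : R := \sum_i a i 0 * b i 0.
Definition enorm n (a : 'cV[R]_n) : R := Num.sqrt (\sum_i a i 0 ^+ 2).

(* Linear latent SCM of one domain: z = A z + B u.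
   Edge a -> b (a is a parent of b) iff A b a != 0. *)
Definition pedge k (A : 'M[R]_k) : rel 'I_k := fun a b => A b a != 0.

Definition acyclic k (A : 'M[R]_k) : Prop :=
  forall i j : 'I_k, A i j != 0 -> ~~ connect (pedge A) i j.

(* i is an ancestor of y = sgn(w^T z): i ~> j for some j with w_j != 0 *)
Definition ancestor_y k (A : 'M[R]_k) (w : 'cV[R]_k) (i : 'I_k) : Prop :=
  exists j : 'I_k, w j 0 != 0 /\ connect (pedge A) i j.

(* mechanism f_{e,i} of latent i: row i of A e and row i of B e *)
Definition same_mech (E : Type) k m (A : E -> 'M[R]_k) (B : E -> 'M[R]_(k, m))
  (e1 e2 : E) (i : 'I_k) : Prop :=
  row i (A e1) = row i (A e2) /\ row i (B e1) = row i (B e2).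

Definition intervened (E : Type) k m (A : E -> 'M[R]_k) (B : E -> 'M[R]_(k, m))
  (i : 'I_k) : Prop := exists e1 e2 : E, ~ same_mech A B e1 e2 i.

Definition lin_spurious_class (E : Type) k m (A : E -> 'M[R]_k)
  (B : E -> 'M[R]_(k, m)) (w : 'cV[R]_k) : Prop :=
  (forall e, acyclic (A e)) /\
  (forall e i, ancestor_y (A e) w i -> ~ intervened A B i).

(* solution map f_e : u |-> z, the unique solution of z = A z + B u *)
Definition solmap k m (A : 'M[R]_k) (B : 'M[R]_(k, m)) (u : 'cV[R]_m) : 'cV[R]_k :=
  invmx (1%:M - A) *m (B *m u).

Section Prob.
Context (dT : measure_display) (T : measurableType dT) (P : probability T R).
Context (m k d : nat) (u : 'I_m -> T -> R) (E : Type)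
  (A : E -> 'M[R]_k) (B : E -> 'M[R]_(k, m)) (G : 'M[R]_(d, k)) (w : 'cV[R]_k).

Definition uvec (t : T) : 'cV[R]_m := \col_l u l t.
Definition zlat (e : E) (t : T) : 'cV[R]_k := solmap (A e) (B e) (uvec t).
Definition xobs (e : E) (t : T) : 'cV[R]_d := G *m zlat e t.
Definition ytar (e : E) (t : T) : R := sgn (dotc w (zlat e t)).

Definition test_risk (eplus : E) (theta : 'cV[R]_d) : R :=
  \int[P]_t ll_loss (dotc theta (xobs eplus t)) (ytar eplus t).

(* E_{P_train}[l(theta^T x, y)], P_train = sum_e P(e) P_e *)
Definition train_risk (Etr : seq E) (pe : E -> R) (theta : 'cV[R]_d) : R :=
  \sum_(e <- Etr) pe e * \int[P]_t ll_loss (dotc theta (xobs e t)) (ytar e t).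

(* M_{e+} = sum_e P(e) E_u[(x_{e+} - x_{e+ -> e})(x_{e+} - x_{e+ -> e})^T] *)
Definition Mmat (Etr : seq E) (pe : E -> R) (eplus : E) : 'M[R]_d :=
  \sum_(e <- Etr) pe e *:
    \matrix_(i, j) \int[P]_t ((xobs eplus t - xobs e t) i 0 *
                             (xobs eplus t - xobs e t) j 0).
End Prob.
End Defs.

Fixpoint inseq (E : Type) (x : E) (s : seq E) : Prop :=
  match s with [::] => False | y :: s' => y = x \/ inseq x s' end.

(* Main.v *)
Require Import Defs.
From HB Require Import structures.
From mathcomp Require Import all_boot all_order all_algebra.
From mathcomp Require Import all_classical all_reals all_analysis.
From mathcomp Require Import measurable_realfun.
From mathcomp Require Import ring lra.
From mathcomp Require Import complex spectral sesquilinear.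
Import Order.TTheory GRing.Theory Num.Theory.
Import numFieldNormedType.Exports.
Local Open Scope ring_scope.
Set Implicit Arguments. Unset Strict Implicit. Unset Printing Implicit Defensive.

Section Graph.
Variable R : realType.

Lemma acyc_zero k (A : 'M[R]_k) (v : 'cV[R]_k) : acyclic A ->
  (forall i, v i 0 != 0 -> v i 0 = \sum_j A i j * v j 0) -> v = 0.
Proof.
move=> acA Hv; apply/matrixP => i0 j0; rewrite ord1 mxE.
apply/eqP/negPn/negP => nz.
pose c := fun i : 'I_k => #|[set x | connect (pedge A) x i]|.
case: (@arg_minnP _ i0 (fun i => v i 0 != 0) c nz) => i vi imin.
have [j Hj] : exists j, A i j * v j 0 != 0.
  case/boolP: [exists j, A i j * v j 0 != 0] => [/existsP//|/existsPn H].
  exfalso; move: (vi); rewrite Hv // big1 ?eqxx // => j _.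
  by apply/eqP; move: (H j); rewrite negbK.
have [Aij vj] : A i j != 0 /\ v j 0 != 0.
  by move: Hj; rewrite mulf_eq0 negb_or => /andP[].
have := imin j vj; apply/negP; rewrite -ltnNge.
apply: proper_card; apply/properP; split.
  apply/fintype.subsetP => x; rewrite !inE => cxj.
  by apply: connect_trans cxj (connect1 _).
exists i; first by rewrite inE connect0.
by rewrite inE; apply: acA.
Qed.
End Graph.

Section Graph2.
Variable R : realType.

Lemma unit_IA k (A : 'M[R]_k) : acyclic A -> (1%:M - A) \in unitmx.
Proof.
move=> acA; rewrite unitmxE unitfE -det_tr; apply/negP => /det0P [v vn0 hv].
have hv' : (1%:M - A) *m v^T = 0 by rewrite -[1%:M - A]trmxK -trmx_mul hv trmx0.
move/eqP: hv'; rewrite mulmxBl mul1mx subr_eq0 => /eqP e.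
have : v^T = 0.
  by apply: (acyc_zero acA) => i _; rewrite {1}e mxE.
move/(congr1 trmx); rewrite trmxK trmx0 => v0.
by rewrite v0 eqxx in vn0.
Qed.

Lemma solmap_eq k m (A : 'M[R]_k) (B : 'M[R]_(k, m)) u : acyclic A ->
  solmap A B u = A *m solmap A B u + B *m u.
Proof.
move=> acA.
have h : (1%:M - A) *m solmap A B u = B *m u.
  by rewrite /solmap mulKVmx ?unit_IA.
by rewrite -h mulmxBl mul1mx addrC subrK.
Qed.

Lemma label_eq k m (E : Type) (A : E -> 'M[R]_k) (B : E -> 'M[R]_(k, m))
  (w : 'cV[R]_k) (uu : 'cV[R]_m) (e e' : E) :
  lin_spurious_class A B w ->
  dotc w (solmap (A e) (B e) uu) = dotc w (solmap (A e') (B e') uu).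
Proof.
case=> acyc spur.
have hz := solmap_eq (B e) uu (acyc e).
have hz' := solmap_eq (B e') uu (acyc e').
set z := solmap (A e) _ _ in hz *; set z' := solmap (A e') _ _ in hz' *.
pose S i := [exists j, (w j 0 != 0) && connect (pedge (A e')) i j].
have SP : forall i, S i -> forall e1 e2, same_mech A B e1 e2 i.
  move=> i /existsP[j /andP[wj cij]] e1 e2.
  have notint := spur e' i (ex_intro _ j (conj wj cij)).
  case: (pselect (same_mech A B e1 e2 i)) => // h; exfalso; apply: notint.
  by exists e1, e2.
pose dl := \col_i (if S i then z i 0 - z' i 0 else 0).
have dl0 : dl = 0.
  apply: (acyc_zero (acyc e')) => i; rewrite mxE; case Si: (S i); last by rewrite eqxx.
  move=> _.
  have [hA hB] := SP i Si e e'.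
  have eA : forall j, A e i j = A e' i j.
    by move=> j; have := congr1 (fun X : 'M[R]_(1, k) => X 0 j) hA; rewrite !mxE.
  have eB : (B e *m uu) i 0 = (B e' *m uu) i 0.
    rewrite !mxE; apply: eq_bigr => l _.
    by have := congr1 (fun X : 'M[R]_(1, m) => X 0 l) hB; rewrite !mxE => ->.
  have zi : z i 0 = \sum_j A e' i j * z j 0 + (B e' *m uu) i 0.
    rewrite {1}hz mxE [X in X + _]mxE -eB; congr (_ + _).
    by apply: eq_bigr => j _; rewrite eA.
  have z'i : z' i 0 = \sum_j A e' i j * z' j 0 + (B e' *m uu) i 0.
    by rewrite {1}hz' mxE [X in X + _]mxE.
  have abc : forall a b c : R, (a + c) - (b + c) = a - b.
    by move=> a b c; rewrite opprD addrACA subrr addr0.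
  rewrite zi z'i abc -sumrB; apply: eq_bigr => j _; rewrite [dl j 0]mxE.
  case Sj: (S j); first by rewrite mulrBr.
  suff -> : A e' i j = 0 by rewrite !mul0r subrr.
  apply/eqP; apply: contraFT Sj => Aij.
  move: Si => /existsP[jw /andP[wj cij]]; apply/existsP; exists jw.
  by rewrite wj /=; apply: connect_trans (connect1 _) cij.
apply/eqP; rewrite -subr_eq0 /dotc -sumrB; apply/eqP; apply: big1 => j _.
rewrite -mulrBr; case wj: (w j 0 == 0); first by rewrite (eqP wj) mul0r.
have Sj : S j by apply/existsP; exists j; rewrite wj connect0.
by have := congr1 (fun X : 'M[R]_(k, 1) => X j 0) dl0; rewrite !mxE Sj => ->; rewrite mulr0.
Qed.
End Graph2.

Section Spec.
Variable R : realType.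
Local Notation C := (R[i]).
Local Notation RC := (real_complex R).

Lemma RC_real (r : R) : RC r \is Num.real.
Proof.
rewrite realE; case: (lerP 0 r) => h; first by rewrite ler0c h.
by apply/orP; right; rewrite -(rmorph0 RC) lecR ltW.
Qed.

Lemma RC_conj (r : R) : (RC r)^* = RC r.
Proof. exact: conj_Creal (RC_real r). Qed.

Lemma real_RC (x : C) : x \is Num.real -> x = RC (complex.Re x).
Proof.
rewrite realE => /orP[h|h].
  move: h; rewrite lecE => /andP[/eqP h _]; case: x h => a b /= ->. by [].
move: h; rewrite lecE => /andP[/eqP h _]; case: x h => a b /= <-. by [].
Qed.

Lemma eig_RC n (M : 'M[R]_n) (r : R) :
  eigenvalue (map_mx RC M) (RC r) -> eigenvalue M r.
Proof.
by rewrite !eigenvalue_root_char -map_char_poly fmorph_root.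
Qed.
End Spec.

Section Spec2.
Variable R : realType.
Local Notation C := (R[i]).
Local Notation RC := (real_complex R).
Local Open Scope sesquilinear_scope.

Lemma quad_le_eig n (M : 'M[R]_n) (lam : R) (y : 'rV[R]_n) :
  M^T = M -> (forall a, eigenvalue M a -> a <= lam) ->
  (y *m M *m y^T) 0 0 <= lam * (y *m y^T) 0 0.
Proof.
move=> MT Hlam.
set Mc := map_mx RC M.
have Mh : Mc \is hermsymmx.
  rewrite is_hermitianmxE expr0 scale1r; apply/eqP/matrixP => i j.
  rewrite !mxE RC_conj; congr RC.
  by have := congr1 (fun A : 'M[R]_n => A i j) MT; rewrite mxE.
have /orthomx_spectralP Mdec := hermitian_normalmx Mh.
set P := spectralmx Mc in Mdec; set D := spectral_diag Mc in Mdec.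
have Pu : P \is unitarymx := spectral_unitarymx Mc.
have Punit : P \in unitmx := spectral_unit Mc.
have PiP : invmx P = P^t* := invmx_unitary Pu.
have PtP : P^t* *m P = 1%:M by rewrite -PiP mulVmx.
have Dreal := hermitian_spectral_diag_real Mh.
have Dle : forall i, D 0 i <= RC lam.
  move=> i.
  have Dr : D 0 i \is Num.real by exact: (mxOverP Dreal).
  have eig : eigenvalue Mc (D 0 i).
    apply/eigenvalueP; exists (row i P).
      have -> : row i P *m Mc = row i (P *m Mc) by rewrite row_mul.
      rewrite {1}Mdec !mulmxA mulmxV // mul1mx.
      by apply/rowP => j; rewrite mul_diag_mx !mxE.
    apply/negP => /eqP r0.
    have := congr1 (fun A : 'M[C]_n => A i i) (unitarymxP Pu).
    rewrite !mxE eqxx /= big1 => [|j _].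
      by move/eqP; rewrite eq_sym oner_eq0.
    have : row i P 0 j = 0 by rewrite r0 mxE.
    by rewrite mxE => ->; rewrite mul0r.
  rewrite (real_RC Dr) lecR; apply: Hlam; apply: eig_RC.
  by rewrite -(real_RC Dr).
set yc := map_mx RC y.
have ycT : yc^t* = map_mx RC (y^T) by apply/matrixP => a b; rewrite !mxE RC_conj.
have e1 : RC ((y *m M *m y^T) 0 0) = (yc *m Mc *m yc^t*) 0 0.
  by rewrite ycT -!map_mxM [RHS]mxE.
have e2 : RC ((y *m y^T) 0 0) = (yc *m yc^t*) 0 0.
  by rewrite ycT -!map_mxM [RHS]mxE.
set w := yc *m P^t*.
set v := P *m yc^t*.
have vw : forall i, v i 0 = (w 0 i)^*.
  move=> i; rewrite !mxE rmorph_sum; apply: eq_bigr => j _.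
  rewrite !mxE rmorphM mulrC; congr (_ * _) => //; exact/esym/conjCK.
have q1 : (yc *m Mc *m yc^t*) 0 0 = \sum_i D 0 i * (w 0 i * (w 0 i)^*).
  rewrite {1}Mdec PiP.
  have -> : yc *m (P^t* *m diag_mx D *m P) *m yc^t* = w *m diag_mx D *m v.
    by rewrite /w /v !mulmxA.
  rewrite mul_mx_diag mxE; apply: eq_bigr => i _.
  rewrite vw mxE. by rewrite [w 0 i * _]mulrC -mulrA.
have q2 : (yc *m yc^t*) 0 0 = \sum_i w 0 i * (w 0 i)^*.
  have -> : yc *m yc^t* = w *m v.
    by rewrite /w /v mulmxA -(mulmxA yc) PtP mulmx1.
  by rewrite mxE; apply: eq_bigr => i _; rewrite vw.
rewrite -lecR rmorphM /= e1 e2 q1 q2 mulr_sumr; apply: ler_sum => i _.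
by apply: ler_wpM2r; [exact: mul_conjC_ge0 | exact: Dle].
Qed.
End Spec2.

Section Loss.
Variable R : realType.

Lemma soft_lip (s t : R) : ln (1 + expR s) - ln (1 + expR t) <= `|s - t|.
Proof.
have p : forall x : R, 0 < 1 + expR x by move=> x; rewrite addr_gt0 ?expR_gt0.
case: (lerP s t) => h.
  have : ln (1 + expR s) <= ln (1 + expR t).
    by rewrite ler_ln ?posrE ?p // lerD2l ler_expR.
  lra.
have hle : 1 + expR s <= expR (s - t) * (1 + expR t).
  rewrite mulrDr mulr1 -expRD subrK lerD2r.
  by have := expR_ge1Dx (s - t); lra.
have h2 : ln (1 + expR s) <= ln (expR (s - t) * (1 + expR t)).
  by rewrite ler_ln ?posrE ?mulr_gt0 ?expR_gt0 ?p.
move: h2; rewrite lnM ?posrE ?expR_gt0 ?p // expRK.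
lra.
Qed.

Lemma sgn_pm (t : R) : sgn t = 1 \/ sgn t = -1.
Proof. by rewrite /sgn; case: ifP; auto. Qed.

Lemma ll_lip (a b y : R) : (y = 1 \/ y = -1) ->
  ll_loss a y - ll_loss b y <= `|a - b|.
Proof.
move=> hy; rewrite /ll_loss; apply: le_trans (soft_lip _ _) _.
have -> : - (y * a) - - (y * b) = y * (b - a) by ring.
rewrite normrM distrC.
by case: hy => ->; rewrite ?normr1 ?normrN1 mul1r.
Qed.

Lemma ll_ge0 (a y : R) : 0 <= ll_loss a y.
Proof. by rewrite /ll_loss ln_ge0 // lerDl expR_ge0. Qed.

Lemma ll_bound (a y : R) : (y = 1 \/ y = -1) ->
  ll_loss a y <= ln (1 + 1) + `|a|.
Proof.
move=> hy; have := ll_lip a 0 hy.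
have -> : ll_loss 0 y = ln (1 + 1) by rewrite /ll_loss mulr0 oppr0 expR0.
by rewrite subr0; lra.
Qed.
End Loss.

Section L2.
Variables (R : realType) (dT : measure_display) (T : measurableType dT)
  (P : probability T R).
Local Open Scope classical_set_scope.
Implicit Types f g : T -> R.

Definition intR (f : T -> R) := P.-integrable setT (EFin \o f).
Definition L2 (f : T -> R) := measurable_fun setT f /\ intR (fun t => f t ^+ 2).

Lemma intR_bound f g : measurable_fun setT f -> intR g ->
  (forall t, `|f t| <= g t) -> intR f.
Proof.
move=> mf ig fg; apply: (le_integrable _ _ _ ig) => //.
  exact/measurable_EFinP.
move=> t _ /=; rewrite lee_fin.
exact: le_trans (fg t) (ler_norm _).
Qed.

Lemma intR_cst c : intR (fun _ => c).
Proof. exact: finite_measure_integrable_cst. Qed.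

Lemma intR_add f g : intR f -> intR g -> intR (fun t => f t + g t).
Proof.
move=> hf hg; have := integrableD measurableT hf hg.
by apply: eq_integrable => // t _.
Qed.

Lemma intR_scale a f : intR f -> intR (fun t => a * f t).
Proof.
move=> hf; have := integrableZl measurableT a hf.
by apply: eq_integrable => // t _.
Qed.

Lemma intR_opp f : intR f -> intR (fun t => - f t).
Proof.
move=> hf; have := intR_scale (-1) hf.
by apply: eq_integrable => // t _ /=; rewrite mulN1r.
Qed.

Lemma intR_sub f g : intR f -> intR g -> intR (fun t => f t - g t).
Proof. by move=> hf hg; apply: intR_add => //; exact: intR_opp. Qed.

Lemma intR_sum (I : Type) (s : seq I) (F : I -> T -> R) :
  (forall i, intR (F i)) -> intR (fun t => \sum_(i <- s) F i t).
Proof.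
move=> hF; elim: s => [|i s IH].
  by under eq_fun do rewrite big_nil; exact: intR_cst.
by under eq_fun do rewrite big_cons; exact: intR_add.
Qed.

Lemma intR_meas f : intR f -> measurable_fun setT f.
Proof. by case/integrableP => /measurable_EFinP. Qed.

Lemma L2_cst c : L2 (fun _ => c).
Proof. by split; [exact: measurable_cst | exact: intR_cst]. Qed.

Lemma L2_scale a f : L2 f -> L2 (fun t => a * f t).
Proof.
case=> mf hf; split.
  by apply: measurable_funM => //; exact: measurable_cst.
have := intR_scale (a ^+ 2) hf.
by apply: eq_integrable => // t _ /=; rewrite exprMn.
Qed.

Lemma L2_add f g : L2 f -> L2 g -> L2 (fun t => f t + g t).
Proof.
case=> mf hf [mg hg]; split; first exact: measurable_funD.
apply: (intR_bound (g := fun t => 2 * f t ^+ 2 + 2 * g t ^+ 2)).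
- by apply: measurable_funX; exact: measurable_funD.
- by apply: intR_add; apply: intR_scale.
move=> t; rewrite ger0_norm ?sqr_ge0 //.
have := sqr_ge0 (f t - g t); rewrite sqrrB sqrrD => h.
lra.
Qed.

Lemma L2_sum (I : Type) (s : seq I) (F : I -> T -> R) :
  (forall i, L2 (F i)) -> L2 (fun t => \sum_(i <- s) F i t).
Proof.
move=> hF; elim: s => [|i s IH].
  by under eq_fun do rewrite big_nil; exact: L2_cst.
by under eq_fun do rewrite big_cons; exact: L2_add.
Qed.

Lemma L2_mul f g : L2 f -> L2 g -> intR (fun t => f t * g t).
Proof.
case=> mf hf [mg hg].
apply: (intR_bound (g := fun t => f t ^+ 2 + g t ^+ 2)).
- exact: measurable_funM.
- exact: intR_add.
move=> t; rewrite normrM.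
have h1 := real_normK (num_real (f t)).
have h2 := real_normK (num_real (g t)).
have := sqr_ge0 (`|f t| - `|g t|); rewrite sqrrB h1 h2 => h.
have := normr_ge0 (f t); have := normr_ge0 (g t).
nra.
Qed.

Lemma L2_abs f : L2 f -> intR (fun t => `|f t|).
Proof.
move=> hf; case: (hf) => mf _.
have := L2_mul hf (L2_cst 1); rewrite /intR => h.
apply: (le_integrable _ _ _ h) => //.
  by apply/measurable_EFinP; apply: measurableT_comp.
by move=> t _ /=; rewrite lee_fin mulr1 normr_id.
Qed.
End L2.

Section Helpers.
Variables (R : realType) (dT : measure_display) (T : measurableType dT)
  (P : probability T R).
Local Open Scope classical_set_scope.

Lemma ler_sum_in (E : Type) (s : seq E) (F G : E -> R) :
  (forall e, inseq e s -> F e <= G e) ->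
  \sum_(e <- s) F e <= \sum_(e <- s) G e.
Proof.
elim: s => [|x s IH] H; first by rewrite !big_nil.
rewrite !big_cons; apply: lerD; first by apply: H; left.
by apply: IH => e he; apply: H; right.
Qed.

Lemma cs_aux (X s : R) : 0 <= X + - (s * 2) * s + s ^+ 2 * 1 -> s ^+ 2 <= X.
Proof. lra. Qed.

Lemma sumr_ge0_in (E : Type) (s : seq E) (F : E -> R) :
  (forall e, inseq e s -> 0 <= F e) -> 0 <= \sum_(e <- s) F e.
Proof.
elim: s => [|x s IH] H; first by rewrite big_nil.
rewrite big_cons; apply: addr_ge0; first by apply: H; left.
by apply: IH => e he; apply: H; right.
Qed.

Lemma Rint_sum (I : Type) (s : seq I) (F : I -> T -> R) :
  (forall i, intR P (F i)) ->
  \int[P]_t (\sum_(i <- s) F i t) = \sum_(i <- s) \int[P]_t F i t.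
Proof.
move=> hF; elim: s => [|i s IH].
  rewrite big_nil; under eq_Rintegral do rewrite big_nil.
  by rewrite Rintegral_cst // mul0r.
rewrite big_cons -IH; under eq_Rintegral do rewrite big_cons.
by rewrite RintegralD //; [exact: hF | exact: intR_sum].
Qed.
End Helpers.


Local Open Scope classical_set_scope.

Theorem corollary1 (R : realType) (dT : measure_display) (T : measurableType dT)
  (P : probability T R) (m k d : nat) (u : 'I_m -> T -> R) (E : Type)
  (A : E -> 'M[R]_k) (B : E -> 'M[R]_(k, m)) (G : 'M[R]_(d, k)) (w : 'cV[R]_k)
  (Etr : seq E) (pe : E -> R) (eplus : E) (lam1 : R) (theta : 'cV[R]_d) :
  (forall l, measurable_fun setT (u l)) ->
  (forall l, P.-integrable setT (fun t => ((u l t) ^+ 2)%:E)) ->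
  lin_spurious_class A B w ->
  (forall e, inseq e Etr -> 0 <= pe e) ->
  \sum_(e <- Etr) pe e = 1 ->
  eigenvalue (Mmat P u A B G Etr pe eplus) lam1 ->
  (forall a, eigenvalue (Mmat P u A B G Etr pe eplus) a -> a <= lam1) ->
  test_risk P u A B G w eplus theta
    <= train_risk P u A B G w Etr pe theta + enorm theta * Num.sqrt lam1.
Proof.
move=> mu iu hsp hpe hsum heig hmax.
have uL2 : forall l, L2 P (u l) by move=> l; split; [exact: mu | exact: iu].
have zL2 : forall e i, L2 P (fun t => zlat u A B e t i 0).
  move=> e i.
  have -> : (fun t => zlat u A B e t i 0) =
      (fun t => \sum_l (invmx (1%:M - A e) *m B e) i l * u l t).
    apply/funext => t; rewrite /zlat /solmap mulmxA mxE.
    by apply: eq_bigr => l _; congr (_ * _); rewrite /uvec mxE.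
  by apply: L2_sum => l; apply: L2_scale.
have xL2 : forall e i, L2 P (fun t => xobs u A B G e t i 0).
  move=> e i.
  have -> : (fun t => xobs u A B G e t i 0) =
      (fun t => \sum_j G i j * zlat u A B e t j 0).
    by apply/funext => t; rewrite /xobs mxE.
  by apply: L2_sum => j; apply: L2_scale.
have L2_sub : forall f g, L2 P f -> L2 P g -> L2 P (fun t => f t - g t).
  move=> f g hf hg.
  have -> : (fun t => f t - g t) = (fun t => f t + (-1) * g t).
    by apply/funext => t; rewrite mulN1r.
  by apply: L2_add => //; apply: L2_scale.
pose X := xobs u A B G.
pose ft e t := dotc theta (X e t).
pose y t := ytar u A B w eplus t.
have yeq : forall e t, ytar u A B w e t = y t.
  move=> e t; rewrite /y /ytar /zlat.
  by rewrite (@label_eq _ _ _ _ A B w (uvec u t) e eplus hsp).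
have fL2 : forall e, L2 P (ft e).
  by move=> e; apply: L2_sum => i; apply: L2_scale; exact: xL2.
have ypm : forall t, y t = 1 \/ y t = -1 by move=> t; exact: sgn_pm.
have ymeas : measurable_fun setT y.
  rewrite /y /ytar /sgn; apply: measurable_fun_ifT.
  - apply: measurable_fun_ler; first exact: measurable_cst.
    have [hm _] : L2 P (fun t => dotc w (zlat u A B eplus t)).
      by apply: L2_sum => j; apply: L2_scale; exact: zL2.
    exact: hm.
  - exact: measurable_cst.
  - exact: measurable_cst.
pose ll e t := ll_loss (ft e t) (y t).
have llint : forall e, intR P (ll e).
  move=> e; apply: (intR_bound (g := fun t => ln (1 + 1) + `|ft e t|)).
  - rewrite /ll /ll_loss; apply: measurableT_comp; first exact: measurable_ln.
    apply: measurable_funD; first exact: measurable_cst.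
    apply: measurableT_comp; first exact: measurable_expR.
    apply: measurable_funN; apply: measurable_funM => //.
    by case: (fL2 e).
  - by apply: intR_add; [exact: intR_cst | exact: L2_abs].
  - move=> t; rewrite ger0_norm ?ll_ge0 //; exact: ll_bound.
have subE : forall (a b : 'cV[R]_d) i, (a - b) i 0 = a i 0 - b i 0.
  by move=> a b i; rewrite !mxE.
pose Dl e i t := (X eplus t - X e t) i 0.
have DL2 : forall e i, L2 P (Dl e i).
  move=> e i; have -> : Dl e i = (fun t => X eplus t i 0 - X e t i 0).
    by apply/funext => t; rewrite /Dl subE.
  by apply: L2_sub; apply: xL2.
pose g e t := ft eplus t - ft e t.
have gE : forall e t, g e t = \sum_i theta i 0 * Dl e i t.
  move=> e t; rewrite /g /ft /dotc -sumrB; apply: eq_bigr => i _.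
  by rewrite /Dl subE mulrBr.
have gL2 : forall e, L2 P (g e) by move=> e; exact: L2_sub.
pose a e := \int[P]_t `|g e t|.
pose q e := \int[P]_t (g e t ^+ 2).
have claim1 : forall e, \int[P]_t ll eplus t <= \int[P]_t ll e t + a e.
  move=> e; rewrite -lerBlDl -(RintegralB measurableT (llint eplus) (llint e)).
  apply: le_Rintegral => //.
  - by apply: intR_sub; exact: llint.
  - exact: L2_abs.
  - by move=> t _; rewrite /ll; exact: ll_lip.
have haq : forall e, a e ^+ 2 <= q e.
  move=> e.
  have h0 : 0 <= \int[P]_t ((`|g e t| - a e) ^+ 2).
    by apply: Rintegral_ge0 => t _; exact: sqr_ge0.
  have i1 : intR P (fun t => g e t ^+ 2) by case: (gL2 e).
  have i2 : intR P (fun t => (- (2 * a e)) * `|g e t|).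
    by apply: intR_scale; exact: L2_abs.
  have i3 : intR P (fun t => a e ^+ 2) by exact: intR_cst.
  have eqi : \int[P]_t ((`|g e t| - a e) ^+ 2) = q e + (- (2 * a e)) * a e + a e ^+ 2.
    rewrite (@eq_Rintegral _ _ _ P setT (fun t => g e t ^+ 2 + ((- (2 * a e)) * `|g e t| + a e ^+ 2))); last first.
      by move=> t _; rewrite sqrrB real_normK ?num_real //; ring.
    rewrite (RintegralD measurableT i1 (intR_add i2 i3)).
    rewrite (RintegralD measurableT i2 i3).
    rewrite (RintegralZl _ measurableT (L2_abs (gL2 e))).
    rewrite Rintegral_cst // (_ : fine (P setT) = 1); last by have := probability_setT P; move=> /= ->.
    by rewrite mulr1 addrA.
  move: h0; rewrite eqi => h0.
  lra.
have Msym : (Mmat P u A B G Etr pe eplus)^T = Mmat P u A B G Etr pe eplus.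
  apply/matrixP => i j; rewrite /Mmat mxE !summxE; apply: eq_bigr => e _.
  rewrite !mxE; congr (_ * _); apply: eq_Rintegral => t _; by rewrite mulrC.
have Qe : ((theta^T) *m Mmat P u A B G Etr pe eplus *m theta) 0 0 =
    \sum_(e <- Etr) pe e * q e.
  rewrite /Mmat mulmx_sumr mulmx_suml summxE; apply: eq_bigr => e _.
  rewrite -scalemxAr -scalemxAl mxE; congr (_ * _).
  have Kij : forall i j, (\matrix_(i, j) \int[P]_t
      ((xobs u A B G eplus t - xobs u A B G e t) i 0 *
       (xobs u A B G eplus t - xobs u A B G e t) j 0)) i j =
      \int[P]_t (Dl e i t * Dl e j t).
    by move=> i j; rewrite mxE.
  have iF : forall i j, intR P (fun t => (theta i 0 * Dl e i t) * (theta j 0 * Dl e j t)).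
    by move=> i j; apply: L2_mul; apply: L2_scale.
  rewrite /q (@eq_Rintegral _ _ _ P setT
     (fun t => \sum_j \sum_i (theta i 0 * Dl e i t) * (theta j 0 * Dl e j t))); last first.
    by move=> t _; rewrite gE expr2 mulr_sumr; apply: eq_bigr => j _; rewrite mulr_suml.
  rewrite Rint_sum; last by move=> j; apply: intR_sum => i; exact: iF.
  rewrite [LHS]mxE; apply: eq_bigr => j _.
  rewrite Rint_sum; last by move=> i; exact: iF.
  rewrite [(_ *m _) 0 j]mxE mulr_suml; apply: eq_bigr => i _.
  rewrite Kij [theta^T 0 i]mxE.
  rewrite [RHS](@eq_Rintegral _ _ _ P setT
     (fun t => (theta i 0 * theta j 0) * (Dl e i t * Dl e j t))); last first.
    by move=> t _; ring.
  rewrite (RintegralZl _ measurableT (L2_mul (DL2 e i) (DL2 e j))).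
  ring.
have trainE : train_risk P u A B G w Etr pe theta =
    \sum_(e <- Etr) pe e * \int[P]_t ll e t.
  rewrite /train_risk; apply: eq_bigr => e _.
  apply: (f_equal (fun r => pe e * r)).
  apply: (@eq_Rintegral _ _ _ P setT (ll e)).
  by move=> t _; rewrite /ll yeq.
have testE : test_risk P u A B G w eplus theta = \int[P]_t ll eplus t by [].
rewrite trainE testE.
have S1 : \int[P]_t ll eplus t = \sum_(e <- Etr) pe e * \int[P]_t ll eplus t.
  by rewrite -mulr_suml hsum mul1r.
have S2 : \sum_(e <- Etr) pe e * \int[P]_t ll eplus t <=
    \sum_(e <- Etr) pe e * (\int[P]_t ll e t + a e).
  by apply: ler_sum_in => e he; apply: ler_wpM2l; [exact: hpe | exact: claim1].
have S3 : \sum_(e <- Etr) pe e * (\int[P]_t ll e t + a e) =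
    \sum_(e <- Etr) pe e * \int[P]_t ll e t + \sum_(e <- Etr) pe e * a e.
  by rewrite -big_split; apply: eq_bigr => e _; rewrite mulrDr.
set Sa := \sum_(e <- Etr) pe e * a e in S3.
have CS : Sa ^+ 2 <= \sum_(e <- Etr) pe e * a e ^+ 2.
  have h0 : 0 <= \sum_(e <- Etr) pe e * (a e - Sa) ^+ 2.
    by apply: sumr_ge0_in => e he; apply: mulr_ge0; [exact: hpe | exact: sqr_ge0].
  have eq2 : \sum_(e <- Etr) pe e * (a e - Sa) ^+ 2 =
      \sum_(e <- Etr) pe e * a e ^+ 2 + (- (Sa * 2)) * \sum_(e <- Etr) pe e * a e
      + Sa ^+ 2 * \sum_(e <- Etr) pe e.
    rewrite !mulr_sumr -!big_split /=.
    apply: eq_bigr => e _.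
    ring.
  by move: h0; rewrite eq2 hsum -/Sa; exact: cs_aux.
have Sq : \sum_(e <- Etr) pe e * a e ^+ 2 <= \sum_(e <- Etr) pe e * q e.
  by apply: ler_sum_in => e he; apply: ler_wpM2l; [exact: hpe | exact: haq].
have Qle : \sum_(e <- Etr) pe e * q e <= lam1 * ((theta^T) *m theta) 0 0.
  by rewrite -Qe; have := quad_le_eig (theta^T) Msym hmax; rewrite trmxK.
have nt : ((theta^T) *m theta) 0 0 = \sum_i theta i 0 ^+ 2.
  by rewrite mxE; apply: eq_bigr => i _; rewrite mxE expr2.
have s0 : 0 <= \sum_i theta i 0 ^+ 2 by apply: sumr_ge0 => i _; exact: sqr_ge0.
have fin : Sa <= enorm theta * Num.sqrt lam1.
  apply: (le_trans (ler_norm _)); rewrite -sqrtr_sqr /enorm -(sqrtrM _ s0).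
  apply: ler_wsqrtr; rewrite mulrC -nt.
  exact: le_trans CS (le_trans Sq Qle).
have S1' : \int[P]_t ll eplus t <= \sum_(e <- Etr) pe e * \int[P]_t ll eplus t.
  by move/eqP: S1; rewrite eq_le => /andP[].
apply: (le_trans S1'); apply: (le_trans S2); rewrite S3 lerD2l; exact: fin.
Qed.
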